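(* Consider the greedy algorithm (described in the context) run on a finite principal left ideal ring $R$ with a respectful order $<$, an ordered basis $B$ of $R^n$ and a left multiplicative property $P$ on $R^n$, producing nested codes $C_0\subseteq C_1\subseteq\dots\subseteq C_n$. Then for every $i\in\{1,\dots,n\}$, every vector $x\in V_i\setminus V_{i-1}$ such that $P[\gamma x+c]$ is true for all $\gamma\in\Gamma$ and all $c\in C_i$ already lies in $C_i$.
   Context: $R$ is a finite principal left ideal ring with unit group $R^\ast$; codes are left submodules of $R^n$. A property $P:R^n\to\{\text{true},\text{false}\}$ is left multiplicative if $P[ux]=P[x]$ for all $u\in R^\ast$, $x\in R^n$. A total order $<$ on $R$ is respectful if for all nonzero $x,y\in R$ with $Rx\supsetneq Ry$ there is $\alpha\in R^\ast$ with $\alpha x<uy$ for all $u\in R^\ast$. Fix an ordered basis $B=(b_1,\dots,b_n)$ of the free left module $R^n$; put $V_0=\{0\}$ and $V_i=Rb_1+\dots+Rb_i$. The lexicographic order on $R^n$: if $x\in V_{i-1}$ and $y\in V_i\setminus V_{i-1}$ then $x<y$; if $x\ne y$ both lie in the level set $V_i\setminus V_{i-1}$, write $x=\sum_{j\le i}x_jb_j$, $y=\sum_{j\le i}y_jb_j$, let $k$ be the largest index with $x_k\ne y_k$, and set $x<y$ iff $x_k<y_k$ in $R$. Fix a set $\Gamma\subseteq R$ containing one generator of each nonzero left ideal of $R$. Greedy algorithm: $C_0=\{0\}$; for $i=1,\dots,n$, let $a_i$ be the smallest vector of $V_i\setminus V_{i-1}$ (if any) such that $P[\gamma a_i+c]$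 is true for all $\gamma\in\Gamma$ and all $c\in C_{i-1}$; if such $a_i$ exists set $C_i=Ra_i+C_{i-1}$, otherwise $C_i=C_{i-1}$. The output $C_n$ is the lexicode $C(<,B,P)$. *)

(* Defs.v *)
From HB Require Import structures.
From mathcomp Require Import all_boot all_order all_algebra.
Set Implicit Arguments. Unset Strict Implicit. Unset Printing Implicit Defensive.
Import GRing.Theory.
Local Open Scope ring_scope.

Section LexDefs.
Variable R : finUnitRingType.

Definition lgen (x : R) : {set R} := [set r * x | r : R].

Definition left_ideal (I : {set R}) : Prop :=
  0 \in I /\ (forall a b, a \in I -> b \in I -> a + b \in I) /\
  (forall r a, a \in I -> r * a \in I).

Definition principal_left_ideal_ring : Prop :=
  forall I : {set R}, left_ideal I -> exists x : R, I = lgen x.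

Definition strict_total_order (lt : rel R) : Prop :=
  (forall x, ~~ lt x x) /\ (forall x y z, lt x y -> lt y z -> lt x z) /\
  (forall x y, x != y -> lt x y || lt y x).

Definition respectful (lt : rel R) : Prop :=
  forall x y : R, x != 0 -> y != 0 -> lgen y \proper lgen x ->
    exists alpha : R, alpha \is a GRing.unit /\
      forall u : R, u \is a GRing.unit -> lt (alpha * x) (u * y).

Definition generator_set (Gamma : {set R}) : Prop :=
  (forall g, g \in Gamma -> g != 0) /\
  (forall I : {set R}, left_ideal I -> I != [set 0] ->
     exists! g, g \in Gamma /\ I = lgen g).

Variable n : nat.

Definition left_multiplicative (P : 'rV[R]_n -> bool) : Prop :=
  forall (u : R) (x : 'rV[R]_n), u \is a GRing.unit -> P (u *: x) = P x.

Definition is_basis (B : 'I_n -> 'rV[R]_n) : Prop :=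
  forall x : 'rV[R]_n, exists! c : {ffun 'I_n -> R}, x = \sum_j c j *: B j.

(* membership in V_i = R b_1 + ... + R b_i (b_1 is B ord0) *)
Definition inV (B : 'I_n -> 'rV[R]_n) (i : nat) (x : 'rV[R]_n) : Prop :=
  exists c : {ffun 'I_n -> R},
    (forall j : 'I_n, (i <= j)%N -> c j = 0) /\ x = \sum_j c j *: B j.

Definition in_level (B : 'I_n -> 'rV[R]_n) (i : nat) (x : 'rV[R]_n) : Prop :=
  inV B i x /\ ~ inV B i.-1 x.

Definition lexlt (lt : rel R) (B : 'I_n -> 'rV[R]_n) (x y : 'rV[R]_n) : Prop :=
  exists i : nat, (1 <= i <= n)%N /\ in_level B i y /\
    (inV B i.-1 x \/
     (in_level B i x /\ x <> y /\
      exists (cx cy : {ffun 'I_n -> R}) (k : 'I_n),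
        x = \sum_j cx j *: B j /\ y = \sum_j cy j *: B j /\
        cx k <> cy k /\ (forall j : 'I_n, (k < j)%N -> cx j = cy j) /\
        lt (cx k) (cy k))).

Definition candidate (B : 'I_n -> 'rV[R]_n) (Gamma : {set R})
  (P : 'rV[R]_n -> bool) (Cprev : {set 'rV[R]_n}) (i : nat) (a : 'rV[R]_n) : Prop :=
  in_level B i a /\
  forall g c, g \in Gamma -> c \in Cprev -> P (g *: a + c).

Definition greedy_run (lt : rel R) (B : 'I_n -> 'rV[R]_n) (Gamma : {set R})
  (P : 'rV[R]_n -> bool) (C : nat -> {set 'rV[R]_n}) : Prop :=
  C 0%N = [set 0] /\
  forall i : nat, (1 <= i <= n)%N ->
    (exists a : 'rV[R]_n,
       candidate B Gamma P (C i.-1) i a /\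
       (forall b, candidate B Gamma P (C i.-1) i b -> b = a \/ lexlt lt B a b) /\
       C i = [set v | [exists r : R, exists c, (c \in C i.-1) && (v == r *: a + c)]])
    \/
    ((forall a, ~ candidate B Gamma P (C i.-1) i a) /\ C i = C i.-1).

End LexDefs.

(* Main.v *)
Require Import Defs.
From HB Require Import structures.
From mathcomp Require Import all_boot all_order all_algebra.
Import GRing.Theory.
Local Open Scope ring_scope.

Section Ring.
Variable R : finUnitRingType.
Implicit Types (a b f x y : R).

Definition inC f x := f * x * f == x.

Lemma inCP f x : f * f = f -> reflect (f * x = x /\ x * f = x) (inC f x).
Proof.
move=> ff; apply: (iffP eqP) => [H|[H1 H2]]; last by rewrite H1 H2.
split; rewrite -H.
- by rewrite !mulrA ff.
- by rewrite -mulrA ff.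
Qed.

Lemma pow_period a : exists p, (0 < p)%N /\ a ^+ (p + p) = a ^+ p.
Proof.
pose g := fun k : 'I_(#|R|.+1) => a ^+ k.
have : ~ injective g.
  move=> /leq_card; rewrite card_ord ltnn //.
have [/existsP [i /existsP [j /andP [nij /eqP gij]]] _ | H] :=
  boolP [exists i, exists j, (i != j) && (g i == g j)]; last first.
  case; move=> i j gij; apply/eqP; apply: contraNT H => nij.
  by apply/existsP; exists i; apply/existsP; exists j; rewrite nij gij eqxx.
wlog lij : i j nij gij / (i < j)%N.
  move=> W; case: (ltngtP i j) => h; first exact: (W i j).
  - by apply: (W j i); rewrite // eq_sym.
  - by move: nij; rewrite (val_inj h) eqxx.
rewrite /g in gij.
set m := (j - i)%N.
have step : forall k, (i <= k)%N -> a ^+ (k + m) = a ^+ k.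
  move=> k ik; rewrite -(subnK ik) -addnA /m addnC.
  rewrite exprD subnKC ?(ltnW lij) // -gij -exprD addnC //.
have stepc : forall c k, (i <= k)%N -> a ^+ (k + c * m) = a ^+ k.
  elim=> [|c IH] k ik; first by rewrite mul0n addn0.
  by rewrite mulSn addnA IH ?step // (leq_trans ik) // leq_addr.
exists (i.+1 * m)%N; split.
  by rewrite muln_gt0 subn_gt0 lij.
rewrite stepc //; rewrite /m; apply: (leq_trans (leqnSn i)).
by rewrite leq_pmulr // subn_gt0.
Qed.

Definition cs f := #|[set x : R | inC f x]|.

Section Corner.
Variable f : R.
Hypothesis ff : f * f = f.

Lemma inCl x : inC f x -> f * x = x. Proof. by move/(inCP _ _ ff) => []. Qed.
Lemma inCr x : inC f x -> x * f = x. Proof. by move/(inCP _ _ ff) => []. Qed.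
Lemma inCI x : f * x = x -> x * f = x -> inC f x.
Proof. by move=> h1 h2; apply/(inCP _ _ ff). Qed.
Lemma inC0 : inC f 0. Proof. by rewrite /inC mulr0 mul0r. Qed.
Lemma inCf : inC f f. Proof. by rewrite /inC ff ff. Qed.
Lemma inCM x y : inC f x -> inC f y -> inC f (x * y).
Proof.
move=> hx hy; apply: inCI; first by rewrite mulrA inCl.
by rewrite -mulrA inCr.
Qed.
Lemma inCD x y : inC f x -> inC f y -> inC f (x + y).
Proof. by move=> hx hy; apply: inCI; rewrite ?mulrDr ?mulrDl ?inCl ?inCr. Qed.
Lemma inCN x : inC f x -> inC f (- x).
Proof. by move=> hx; apply: inCI; rewrite ?mulrN ?mulNr ?inCl ?inCr. Qed.
Lemma inCB x y : inC f x -> inC f y -> inC f (x - y).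
Proof. by move=> hx hy; apply: inCD => //; apply: inCN. Qed.
Lemma inCX x k : inC f x -> (0 < k)%N -> inC f (x ^+ k).
Proof.
move=> hx; case: k => // k _; elim: k => [|k IH]; first by rewrite expr1.
by rewrite exprS inCM.
Qed.
Lemma fX x k : inC f x -> f * x ^+ k = x ^+ k * f.
Proof.
move=> hx; case: k => [|k]; first by rewrite expr0 mulr1 mul1r.
by rewrite inCl ?inCr // inCX.
Qed.
Lemma inCfX x k : inC f x -> inC f (f * x ^+ k).
Proof.
move=> hx; apply: inCI; first by rewrite mulrA ff.
by rewrite fX // -mulrA ff.
Qed.
Lemma inCXf x k : inC f x -> inC f (x ^+ k * f).
Proof. by move=> hx; rewrite -fX // inCfX. Qed.

Lemma geom x q : inC f x -> x ^+ q = 0 -> exists y, inC f y /\ y * (f - x) = f.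
Proof.
move=> hx xq; exists (\sum_(i < q) x ^+ i * f); split.
  apply: (big_ind (inC f)); [exact: inC0| exact: inCD|move=> i _; exact: inCXf].
rewrite mulr_suml -(big_mkord xpredT (fun i => x ^+ i * f * (f - x))).
rewrite (telescope_sumr_eq (fun k => - (x ^+ k * f))) // => [|k _].
  by rewrite xq mul0r oppr0 sub0r expr0 mul1r opprK.
have h : x ^+ k.+1 * f = x ^+ k.+1 by rewrite inCr // inCX.
by rewrite mulrBr -mulrA ff -mulrA (inCl _ hx) -exprSr h opprK addrC.
Qed.

End Corner.

Arguments inCl {f} ff {x}.
Arguments inCr {f} ff {x}.
Arguments inCI {f} ff {x}.
Arguments inC0 {f}.
Arguments inCf {f} ff.
Arguments inCM {f} ff {x y}.
Arguments inCD {f} ff {x y}.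
Arguments inCN {f} ff {x}.
Arguments inCB {f} ff {x y}.
Arguments inCX {f} ff {x k}.
Arguments fX {f} ff {x} k.
Arguments inCfX {f} ff {x} k.
Arguments geom {f} ff {x q}.

Definition GCgoal f a (L : {set R}) :=
  exists l b, [/\ l \in L, inC f b, b * (a + l) = f & (a + l) * b = f].

Definition GCstmt f a (L : {set R}) := forall u l0,
  inC f a -> (forall x, x \in L -> inC f x) ->
  (forall x y, x \in L -> y \in L -> x + y \in L) ->
  (forall s x, inC f s -> x \in L -> s * x \in L) ->
  inC f u -> l0 \in L -> f = u * a + l0 -> GCgoal f a L.

Lemma reduce f a L p : f * f = f ->
  (forall f' a' L', (cs f' < cs f)%N -> f' * f' = f' -> GCstmt f' a' L') ->
  (0 < p)%N -> a ^+ (p + p) = a ^+ p -> a ^+ p != 0 -> GCstmt f a L.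
Proof.
move=> ff IH p0 per enz u l0 ha hL hD hM hu hl0 eq.
set e := a ^+ p in enz.
set e' := f - e.
set As := a ^+ (p.-1 + p).
have ee : e * e = e by rewrite -exprD per.
have hpe : inC f e := inCX ff ha p0.
have fe : f * e = e := inCl ff hpe.
have ef : e * f = e := inCr ff hpe.
have e'e' : e' * e' = e' by rewrite /e' mulrBl !mulrBr ff fe ef ee subrr subr0.
have ee' : e * e' = 0 by rewrite /e' mulrBr ef ee subrr.
have e'e : e' * e = 0 by rewrite /e' mulrBl fe ee subrr.
have fe' : f * e' = e' by rewrite /e' mulrBr ff fe.
have e'f : e' * f = e' by rewrite /e' mulrBl ff ef.
have af : a * f = a := inCr ff ha.
have fa : f * a = a := inCl ff ha.
have ae : a * e = e * a by rewrite /e -exprS -exprSr.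
have ae' : a * e' = e' * a by rewrite /e' mulrBr mulrBl af fa ae.
have Asa : As * a = e by rewrite /As -exprSr -addSn prednK // per.
have aAs : a * As = e by rewrite /As -exprS -addSn prednK // per.
have Ase : As * e = As by rewrite /As /e -exprD -addnA exprD per -exprD.
have eAs : e * As = As by rewrite /As /e -exprD addnC -addnA exprD per -exprD.
have hfe' : inC f e' := inCI ff fe' e'f.
have eeF : e + e' = f by rewrite /e' addrC subrK.
clearbody e' As; clearbody e.
have sub : forall x, inC e' x -> inC f x.
  move=> x hx; have h1 := inCl e'e' hx; have h2 := inCr e'e' hx.
  apply: (inCI ff); first by rewrite -h1 mulrA fe'.
  by rewrite -h2 -mulrA e'f.
have lt_cs : (cs e' < cs f)%N.
  apply: proper_card; apply/properP; split.
    by apply/subsetP => x; rewrite !inE; apply: sub.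
  exists e; first by rewrite inE.
  by rewrite inE /inC e'e mul0r eq_sym.
pose L' := [set y | [exists m in L, y == e' * m * e']].
have inL' : forall m, m \in L -> e' * m * e' \in L'.
  by move=> m hm; rewrite inE; apply/existsP; exists m; rewrite hm eqxx.
have inL'P : forall y, y \in L' -> exists2 m, m \in L & y = e' * m * e'.
  by move=> y; rewrite inE => /existsP [m /andP [hm /eqP ->]]; exists m.
have corner : forall m, inC e' (e' * m * e').
  move=> m; apply: (inCI e'e'); first by rewrite !mulrA e'e'.
  by rewrite -mulrA e'e'.
have [l' [b' [hl' hb' eqb1 eqb2]]] : GCgoal e' (a * e') L'.
  apply: (IH _ _ _ lt_cs e'e' (e' * u * e') (e' * l0 * e')).
  - apply: (inCI e'e'); first by rewrite mulrA -ae' -mulrA e'e'.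
    by rewrite -mulrA e'e'.
  - by move=> y /inL'P [m _ ->].
  - move=> x y /inL'P [m1 h1 ->] /inL'P [m2 h2 ->].
    by rewrite -mulrDl -mulrDr inL' // hD.
  - move=> s x hs /inL'P [m hm ->].
    have -> : s * (e' * m * e') = e' * (s * m) * e'.
      by rewrite !mulrA (inCl e'e' hs) (inCr e'e' hs).
    by rewrite inL' // hM // sub.
  - exact: corner.
  - exact: inL'.
  - have h : e' * f * e' = e' by rewrite e'f e'e'.
    rewrite -{1}h {1}eq mulrDr mulrDl; congr (_ + _).
    rewrite !mulrA -(mulrA (e' * u) e' a) -ae' mulrA -(mulrA _ e' e') e'e'.
    done.
have [m hm hl'eq] := inL'P _ hl'; subst l'.
have hm' := hL _ hm.
have mf : m * f = m := inCr ff hm'.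
have b'e' : b' * e' = b' := inCr e'e' hb'.
have e'b' : e' * b' = b' := inCl e'e' hb'.
have hAs : inC f As.
  apply: (inCI ff); first by rewrite -eAs mulrA fe.
  by rewrite -Ase -mulrA ef.
set X := e' * m * e.
have Xe : X * e = X by rewrite /X -mulrA ee.
have e'X : e' * X = X by rewrite /X !mulrA e'e'.
have em : e' * m = X + e' * m * e'.
  by rewrite /X -mulrDr eeF -mulrA mf.
have Asc : As * (a + e' * m) = e.
  by rewrite mulrDr Asa mulrA -Ase -(mulrA As e e') ee' mulr0 mul0r addr0.
have ba : b' * a = b' * (a * e') by rewrite -{1}b'e' -mulrA -ae'.
have b'c : b' * (a + e' * m) = e' + b' * X.
  rewrite mulrDr ba em mulrDr addrCA -mulrDr eqb1 addrC //.
have cAs : (a + e' * m) * As = e + X * As.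
  by rewrite mulrDl aAs -{1}eAs mulrA.
have cb' : (a + e' * m) * b' = e'.
  by rewrite mulrDl -e'b' !mulrA -mulrDl eqb2.
exists (e' * m), (As + b' - b' * X * As); split.
- exact: hM _ _ hfe' hm.
- apply: (inCB ff); first apply: (inCD ff) => //; first exact: sub.
  apply: (inCM ff); last exact: hAs.
  apply: (inCM ff); first exact: sub.
  by apply: (inCM ff); first apply: (inCM ff).
- rewrite mulrBl mulrDl Asc b'c -(mulrA (b' * X) As) Asc -(mulrA b' X e) Xe.
  by rewrite addrA eeF addrK.
- rewrite mulrBr mulrDr cAs cb' !mulrA cb' e'e' -/X.
  by rewrite addrAC addrK eeF.
Qed.

Lemma nil_left f w a k : f * a = a -> w * a = f -> a ^+ k.+1 = 0 -> a = 0.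
Proof.
move=> fa wa; elim: k => [|k IH]; first by rewrite expr1.
move=> h; apply: IH.
have fak : f * a ^+ k.+1 = a ^+ k.+1 by rewrite exprS mulrA fa.
by rewrite -fak -wa -mulrA -exprS h mulr0.
Qed.

Lemma GC N : forall f a L, (cs f <= N)%N -> f * f = f -> GCstmt f a L.
Proof.
elim: N => [|N IHN] f a L hcs ff.
  exfalso; move: hcs; rewrite leqn0 => /eqP/card0_eq/(_ 0).
  by rewrite inE (inC0 (f := f)).
have IH : forall f' a' L', (cs f' < cs f)%N -> f' * f' = f' -> GCstmt f' a' L'.
  move=> f' a' L' lt ff'; apply: IHN => //.
  by rewrite -ltnS (leq_trans lt hcs).
move=> u l0 ha hL hD hM hu hl0 eq.
have [p [p0 per]] := pow_period a.
case: (eqVneq (a ^+ p) 0) => [ap0|anz]; last first.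
  exact: (reduce _ _ _ _ ff IH p0 per anz u l0 ha hL hD hM hu hl0 eq).
have hl0C := hL _ hl0.
have L0 : 0 \in L by have := hM 0 l0 (inC0 (f := f)) hl0; rewrite mul0r.
have [q [q0 perq]] := pow_period l0.
case: (eqVneq (l0 ^+ q) 0) => [lq0|lnz].
  have [y [hy yeq]] := geom ff hl0C lq0.
  have fl : f - l0 = u * a by rewrite {1}eq addrK.
  have wa : (y * u) * a = f by rewrite -mulrA -fl.
  have a0 : a = 0.
    move: ap0; case: p p0 {per} => // k _; exact: (nil_left _ _ _ k (inCl ff ha) wa).
  have f0 : f = 0 by rewrite -wa a0 mulr0.
  by exists 0, 0; split; rewrite ?mul0r ?mulr0 ?f0 //; apply: inC0.
set e0 := l0 ^+ q in lnz.
have e0L : e0 \in L.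
  have -> : e0 = (f * l0 ^+ q.-1) * l0.
    by rewrite -mulrA -exprSr prednK // (inCl ff (inCX ff hl0C q0)).
  exact: hM _ _ (inCfX ff _ hl0C) hl0.
have e0e0 : e0 * e0 = e0 by rewrite -exprD perq.
have fe0 : f * e0 = e0 := inCl ff (inCX ff hl0C q0).
set l1 := (f - a) * e0.
have l1L : l1 \in L := hM _ _ (inCB ff (inCf ff) ha) e0L.
set a1 := a + l1.
have a1e0 : a1 * e0 = e0.
  by rewrite /a1 /l1 mulrDl -mulrA e0e0 mulrBl fe0 addrC subrK.
have a1ke : forall k, a1 ^+ k * e0 = e0.
  by elim=> [|k IHk]; rewrite ?expr0 ?mul1r // exprSr -mulrA a1e0.
have [p1 [p10 per1]] := pow_period a1.
have a1nz : a1 ^+ p1 != 0.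
  by apply: contra_neq lnz => h; rewrite -(a1ke p1) h mul0r.
have ha1 : inC f a1 := inCD ff ha (hL _ l1L).
have hl0' : l0 - u * l1 \in L.
  by rewrite -mulNr; apply: hD => //; apply: hM => //; apply: inCN.
have eq' : f = u * a1 + (l0 - u * l1).
  by rewrite {1}eq /a1 mulrDr addrACA subrr addr0.
have [l' [b [hl' hb eq1 eq2]]] :=
  reduce _ _ _ _ ff IH p10 per1 a1nz _ _ ha1 hL hD hM hu hl0' eq'.
exists (l1 + l'), b; split => //; first exact: hD.
  by rewrite addrA.
by rewrite addrA.
Qed.


Lemma SR (a u l0 : R) (L : {set R}) :
  (forall x y, x \in L -> y \in L -> x + y \in L) ->
  (forall s x, x \in L -> s * x \in L) -> l0 \in L -> 1 = u * a + l0 ->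
  exists2 l, l \in L & a + l \is a GRing.unit.
Proof.
move=> hD hM hl0 eq.
have i1 : forall x, inC 1 x by move=> x; rewrite /inC mul1r mulr1.
have [l [b [hl _ e1 e2]]] := GC (cs 1) 1 a L (leqnn _) (mulr1 1) u l0 (i1 a) (fun _ _ => i1 _) hD
  (fun s x _ h => hM s x h) (i1 u) hl0 eq.
exists l => //; apply/unitrP; exists b; split => //.
Qed.

Lemma lgen_mem (x : R) : x \in lgen x.
Proof. by apply/imsetP; exists 1 => //; rewrite mul1r. Qed.

Lemma lgenP (x y : R) : reflect (exists r, y = r * x) (y \in lgen x).
Proof.
apply: (iffP imsetP) => [[r _ ->]|[r ->]]; first by exists r.
by exists r.
Qed.

Lemma lgen_left_ideal (x : R) : left_ideal (lgen x).
Proof.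
split; first by apply/lgenP; exists 0; rewrite mul0r.
split.
  by move=> a b /lgenP [r ->] /lgenP [s ->]; apply/lgenP; exists (r + s); rewrite mulrDl.
by move=> r a /lgenP [s ->]; apply/lgenP; exists (r * s); rewrite mulrA.
Qed.

Lemma assoc (a b : R) : lgen a = lgen b ->
  exists2 w, w \is a GRing.unit & a = w * b.
Proof.
move=> eab.
have /lgenP [s as_] : a \in lgen b by rewrite -eab lgen_mem.
have /lgenP [t bt] : b \in lgen a by rewrite eab lgen_mem.
pose L := [set r | r * b == 0].
have [l hl wu] : exists2 l, l \in L & s + l \is a GRing.unit.
  apply: (@SR s t (1 - t * s) L).
- by move=> x y; rewrite !inE mulrDl => /eqP -> /eqP ->; rewrite addr0.
- by move=> r x; rewrite !inE -mulrA => /eqP ->; rewrite mulr0.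
- by rewrite inE mulrBl mul1r -mulrA -as_ -bt subrr.
- by rewrite addrC subrK.
exists (s + l) => //.
by move: hl; rewrite inE mulrDl => /eqP ->; rewrite addr0.
Qed.

Lemma stab (xi al : R) : principal_left_ideal_ring R ->
  exists t, al \in lgen (xi + t * al).
Proof.
move=> PR.
pose J := [set z | [exists r, exists s, z == r * xi + s * al]].
have JP : forall z, reflect (exists r s, z = r * xi + s * al) (z \in J).
  move=> z; rewrite inE; apply: (iffP existsP) => [[r /existsP [s /eqP ->]]|[r [s ->]]].
    by exists r, s.
  by exists r; apply/existsP; exists s.
have [beta Jb] : exists beta, J = lgen beta.
  apply: PR; split; first by apply/JP; exists 0, 0; rewrite !mul0r addr0.
  split.
    move=> x y /JP [r1 [s1 ->]] /JP [r2 [s2 ->]]; apply/JP; exists (r1 + r2), (s1 + s2).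
    by rewrite !mulrDl addrACA.
  move=> r x /JP [r1 [s1 ->]]; apply/JP; exists (r * r1), (r * s1).
  by rewrite mulrDr !mulrA.
have /JP [u [v hb]] : beta \in J by rewrite Jb lgen_mem.
have /lgenP [p hxi] : xi \in lgen beta by rewrite -Jb; apply/JP; exists 1, 0; rewrite mul1r mul0r addr0.
have /lgenP [q hal] : al \in lgen beta by rewrite -Jb; apply/JP; exists 0, 1; rewrite mul1r mul0r add0r.
pose L := [set r | [exists y, (r - y * q) * beta == 0]].
have LP : forall r, reflect (exists y, (r - y * q) * beta = 0) (r \in L).
  move=> r; rewrite inE; apply: (iffP existsP) => [[y /eqP h]|[y h]]; exists y => //.
  by rewrite h.
have [l /LP [y hy] wu] : exists2 l, l \in L & p + l \is a GRing.unit.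
  apply: (@SR p u (1 - u * p) L).
- move=> x1 x2 /LP [y1 h1] /LP [y2 h2]; apply/LP; exists (y1 + y2).
  by rewrite (mulrDl y1 y2 q) opprD addrACA mulrDl h1 h2 addr0.
- move=> s x /LP [y1 h1]; apply/LP; exists (s * y1).
  by rewrite -mulrA -mulrBr -mulrA h1 mulr0.
- apply/LP; exists v.
  rewrite !mulrBl mul1r -!mulrA -hxi -hal hb.
  by rewrite [u * xi + _]addrC addrK subrr.
- by rewrite addrC subrK.
exists y; apply/lgenP; exists (q * (p + l)^-1).
have e1 : xi + y * al = (p + l) * beta.
  have : l * beta = y * q * beta by apply/eqP; rewrite -subr_eq0 -mulrBl hy.
  by rewrite mulrDl => ->; rewrite hxi hal !mulrA.
by rewrite e1 -mulrA mulKr.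
Qed.

End Ring.
Arguments lgen_mem {R}.
Arguments lgenP {R x y}.
Arguments lgen_left_ideal {R}.
Arguments assoc {R a b}.
Arguments stab {R}.

Section Comb.
Variable R : finUnitRingType.
Variable n : nat.
Variable B : 'I_n -> 'rV[R]_n.
Hypothesis hB : is_basis B.

Definition coefs (x : 'rV[R]_n) : {ffun 'I_n -> R} :=
  odflt [ffun => 0] [pick c : {ffun 'I_n -> R} | x == \sum_j c j *: B j].

Lemma coefsE x : x = \sum_j coefs x j *: B j.
Proof.
rewrite /coefs; case: pickP => [c /eqP //|H].
have [c0 [hc0 _]] := hB x.
by move: (H c0); rewrite -hc0 eqxx.
Qed.

Lemma coefs_uniq {x} {c : {ffun 'I_n -> R}} : x = \sum_j c j *: B j -> coefs x = c.
Proof.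
move=> hc; have [c0 [_ u]] := hB x.
by rewrite -(u _ hc) (u _ (coefsE x)).
Qed.

Lemma coefs_lin r x y j : coefs (r *: x + y) j = r * coefs x j + coefs y j.
Proof.
suff -> : coefs (r *: x + y) = [ffun j => r * coefs x j + coefs y j] by rewrite ffunE.
apply: coefs_uniq.
rewrite {1}(coefsE x) {1}(coefsE y) scaler_sumr -big_split /=.
by apply: eq_bigr => i _; rewrite ffunE scalerDl scalerA.
Qed.

Lemma coefs0 j : coefs 0 j = 0.
Proof.
suff -> : coefs 0 = [ffun => 0] by rewrite ffunE.
by apply: coefs_uniq; rewrite big1 // => i _; rewrite ffunE scale0r.
Qed.

Lemma coefsD x y j : coefs (x + y) j = coefs x j + coefs y j.
Proof. by rewrite -{1}(scale1r x) coefs_lin mul1r. Qed.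

Lemma coefsZ r x j : coefs (r *: x) j = r * coefs x j.
Proof. by rewrite -(addr0 (r *: x)) coefs_lin coefs0 addr0. Qed.

Lemma coefsB x y j : coefs (x - y) j = coefs x j - coefs y j.
Proof. by rewrite -scaleN1r coefsD coefsZ mulN1r. Qed.

Lemma coefs_eq0 x : (forall j, coefs x j = 0) -> x = 0.
Proof.
by move=> h; rewrite (coefsE x) big1 // => j _; rewrite h scale0r.
Qed.

Lemma inVP k x : inV B k x <-> forall j : 'I_n, (k <= j)%N -> coefs x j = 0.
Proof.
split.
  move=> [c [hc xc]] j kj; by rewrite (coefs_uniq xc) hc.
by move=> h; exists (coefs x); split => //; exact: coefsE.
Qed.

Lemma inV_mono k k' x : (k <= k')%N -> inV B k x -> inV B k' x.
Proof.
move=> kk /inVP h; apply/inVP => j kj; apply: h; exact: leq_trans kj.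
Qed.

Lemma levelP (I : 'I_n) x : in_level B I.+1 x <->
  (forall j : 'I_n, (I < j)%N -> coefs x j = 0) /\ coefs x I != 0.
Proof.
split.
  move=> [/inVP h1 h2]; split => //.
  apply/eqP => h0; apply: h2; apply/inVP => j /=.
  rewrite leq_eqVlt => /orP [/eqP eIj|lt]; last exact: h1.
  by have -> : j = I by apply: val_inj.
move=> [h1 h2]; split; first by apply/inVP.
by move=> /inVP /(_ I (leqnn _)) /eqP; rewrite (negbTE h2).
Qed.

Lemma level_uniq {i k x} : in_level B i x -> in_level B k x -> i = k.
Proof.
move=> [hi ni] [hk nk].
case: (ltngtP i k) => // h.
  by exfalso; apply: nk; apply: inV_mono hi; rewrite -ltnS prednK // (leq_ltn_trans _ h).
by exfalso; apply: ni; apply: inV_mono hk; rewrite -ltnS prednK // (leq_ltn_trans _ h).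
Qed.

Lemma level_exists {k x} : inV B k x -> x != 0 ->
  exists2 I : 'I_n, (I < k)%N & in_level B I.+1 x.
Proof.
elim: k => [|k IH] hx nx.
  by move: nx; rewrite (coefs_eq0 x (fun j => (proj1 (inVP 0 x) hx) j (leq0n _))) eqxx.
case: (boolP [forall j : 'I_n, (k <= j)%N ==> (coefs x j == 0)]).
  move=> /forallP h.
  have hk : inV B k x by apply/inVP => j kj; apply/eqP; move: (h j); rewrite kj.
  have [I lt lev] := IH hk nx.
  by exists I => //; apply: ltnW.
move=> /forallPn [j]; rewrite negb_imply => /andP [kj nz].
have kn : (k < n)%N := leq_ltn_trans kj (ltn_ord j).
exists (Ordinal kn) => //=; split => // /inVP /(_ j kj) /eqP.
by rewrite (negbTE nz).
Qed.

Lemma inV_coef {k x} {j : 'I_n} : inV B k x -> (k <= j)%N -> coefs x j = 0.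
Proof. by move=> /inVP h; apply: h. Qed.

Lemma inV0 k : inV B k 0. Proof. by apply/inVP => j _; rewrite coefs0. Qed.

Variable lt : rel R.
Variable Gamma : {set R}.
Variable P : 'rV[R]_n -> bool.
Variable C : nat -> {set 'rV[R]_n}.
Hypothesis hg : greedy_run lt B Gamma P C.

Lemma memC {S T : {set 'rV[R]_n}} {a v} :
  S = [set v | [exists r : R, exists c, (c \in T) && (v == r *: a + c)]] ->
  reflect (exists r c, c \in T /\ v = r *: a + c) (v \in S).
Proof.
move=> ->; rewrite inE; apply: (iffP existsP) => [[r /existsP [c /andP [hc /eqP ->]]]|[r [c [hc ->]]]].
  by exists r, c.
by exists r; apply/existsP; exists c; rewrite hc eqxx.
Qed.

Lemma greedy_at {k} : (k < n)%N ->
  (exists a, candidate B Gamma P (C k) k.+1 a /\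
     (forall b, candidate B Gamma P (C k) k.+1 b -> b = a \/ lexlt lt B a b) /\
     C k.+1 = [set v | [exists r : R, exists c, (c \in C k) && (v == r *: a + c)]])
  \/ ((forall a, ~ candidate B Gamma P (C k) k.+1 a) /\ C k.+1 = C k).
Proof. by move=> kn; have [_ h] := hg; exact: (h k.+1 kn). Qed.

Definition submod (S : {set 'rV[R]_n}) k :=
  [/\ 0 \in S, (forall x y, x \in S -> y \in S -> x + y \in S),
      (forall r x, x \in S -> r *: x \in S) & (forall x, x \in S -> inV B k x)].

Lemma C_props {k} : (k <= n)%N -> submod (C k) k.
Proof.
elim: k => [|k IH] kn.
  have [C0 _] := hg; rewrite C0; split.
  - by rewrite inE.
  - by move=> x y; rewrite !inE => /eqP -> /eqP ->; rewrite addr0.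
  - by move=> r x; rewrite !inE => /eqP ->; rewrite scaler0.
  - by move=> x; rewrite inE => /eqP ->; apply: inV0.
have [h0 hD hZ hV] := IH (ltnW kn).
case: (greedy_at kn) => [[a [[[alevV _] _] [_ Ceq]]]|[_ ->]]; last first.
  by split => // x /hV; apply: inV_mono.
split.
- by apply/(memC Ceq); exists 0, 0; rewrite scale0r addr0.
- move=> x y /(memC Ceq) [r [c [hc ->]]] /(memC Ceq) [r' [c' [hc' ->]]].
  apply/(memC Ceq); exists (r + r'), (c + c'); split; first exact: hD.
  by rewrite scalerDl addrACA.
- move=> s x /(memC Ceq) [r [c [hc ->]]].
  apply/(memC Ceq); exists (s * r), (s *: c); split; first exact: hZ.
  by rewrite scalerDr scalerA.
- move=> x /(memC Ceq) [r [c [hc ->]]].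
  apply/inVP => j kj; rewrite coefs_lin (inV_coef alevV kj).
  by rewrite (inV_coef (hV _ hc) (ltnW kj)) mulr0 addr0.
Qed.

Lemma C_step {k} : (k < n)%N -> C k \subset C k.+1.
Proof.
move=> kn; case: (greedy_at kn) => [[a [_ [_ Ceq]]]|[_ ->]]; last exact: subxx.
apply/subsetP => x hx; apply/(memC Ceq); exists 0, x; split => //.
by rewrite scale0r add0r.
Qed.

Lemma C_mono {k k'} : (k <= k')%N -> (k' <= n)%N -> C k \subset C k'.
Proof.
elim: k' => [|k' IH] kk' kn.
  by move: kk'; rewrite leqn0 => /eqP ->.
move: kk'; rewrite leq_eqVlt => /orP [/eqP ->|lt']; first exact: subxx.
apply: subset_trans (IH lt' (ltnW kn)) (C_step kn).
Qed.


Lemma lgen_ne0 (x : R) : x != 0 -> lgen x != [set 0].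
Proof.
move=> nx; apply/eqP => h; move: (lgen_mem x); rewrite h inE.
by rewrite (negbTE nx).
Qed.

Hypotheses (hlt : strict_total_order lt) (hresp : respectful lt)
  (hG : generator_set Gamma) (hP : left_multiplicative P)
  (PR : principal_left_ideal_ring R).

Lemma main m : forall i, (i <= m)%N -> (1 <= i <= n)%N ->
  forall x, in_level B i x ->
  (forall g c, g \in Gamma -> c \in C i -> P (g *: x + c)) -> x \in C i.
Proof.
have [irr [trans _]] := hlt.
elim: m => [|m IHm] i im /andP [i1 iN] x xlev Hx.
  by move: im i1; rewrite leqn0 => /eqP ->.
case: i im i1 iN xlev Hx => // k km _ kn xlev Hx.
have IHs : forall j, (j <= k)%N -> (1 <= j <= n)%N -> forall y, in_level B j y ->
  (forall g c, g \in Gamma -> c \in C j -> P (g *: y + c)) -> y \in C j.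
  move=> j jk; apply: IHm; exact: leq_trans jk km.
pose I := Ordinal kn.
have [hk0 hkD hkZ hkV] := C_props (ltnW kn).
case: (greedy_at kn) => [[a [[alev acand] [amin Ceq]]]|[nocand Ceq]]; last first.
  by exfalso; apply: (nocand x); split => // g c hg' hc; apply: Hx => //; rewrite Ceq.
have /(levelP I) [az anz] := alev.
have /(levelP I) [xz xnz] := xlev.
set al := coefs a I in anz.
set xi := coefs x I in xnz.
have claim : xi \in lgen al.
  apply/negPn/negP => nxi.
  have [t ht] := stab xi al PR.
  set ze := xi + t * al in ht.
  have zeN : ze \notin lgen al.
    apply: contra nxi => /lgenP [r hr]; apply/lgenP; exists (r - t).
    by rewrite mulrBl -hr /ze addrK.
  have prop : lgen al \proper lgen ze.
    apply/properP; split; last by exists ze => //; apply: lgen_mem.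
    apply/subsetP => y /lgenP [r ->]; move/lgenP: ht => [s ->]; apply/lgenP.
    by exists (r * s); rewrite mulrA.
  have ze0 : ze != 0.
    by apply: contraNneq zeN => ->; apply/lgenP; exists 0; rewrite mul0r.
  have [w [wu hw]] := hresp _ _ ze0 anz prop.
  have lt1 : lt (w * ze) al by rewrite -[al]mul1r; apply: hw; exact: unitr1.
  pose z := w *: (x + t *: a).
  have cz : forall j, coefs z j = w * (coefs x j + t * coefs a j).
    by move=> j; rewrite coefsZ coefsD coefsZ.
  have czI : coefs z I = w * ze by rewrite cz.
  have zlev : in_level B k.+1 z.
    apply/(levelP I); split.
      by move=> j lj; rewrite cz xz // az // mulr0 addr0 mulr0.
    rewrite czI; apply: contra ze0 => /eqP h; apply/eqP.
    by rewrite -(mulKr wu ze) h mulr0.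
  have zcand : candidate B Gamma P (C k) k.+1 z.
    split => // g c hg' hc.
    have [gnz hex] := hG.
    have gw0 : g * w != 0.
      apply: contra (gnz _ hg') => /eqP h; apply/eqP.
      by rewrite -(mulrK wu g) h mul0r.
    have [g' [[hg'' eqg] _]] := hex _ (lgen_left_ideal (g * w)) (lgen_ne0 _ gw0).
    have [v vu gv] := assoc eqg.
    have -> : g *: z + c = v *: (g' *: x + ((g' * t) *: a + v^-1 *: c)).
      rewrite /z scalerA gv !scalerDr !scalerA mulrV // scale1r !mulrA addrA //.
    rewrite hP //; apply: Hx => //.
    apply/(memC Ceq); exists (g' * t), (v^-1 *: c); split => //; exact: hkZ.
  case: (amin _ zcand) => [za|].
    by move: lt1; rewrite -czI za -/al (negbTE (irr _)).
  move=> [k' [hk' [zlev' [ainV|[_ [neq [cx [cy [k0 [ea [ez [ne [above ltc]]]]]]]]]]]]].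
    have kk : k' = k.+1 := level_uniq zlev' zlev.
    by rewrite kk in ainV; case: alev => _; apply.
  have hcx := coefs_uniq ea.
  have hcy := coefs_uniq ez.
  rewrite -hcx -hcy in ne above ltc.
  have k0I : k0 = I.
    apply: val_inj => /=; case: (ltngtP k0 k) => // h.
      by exfalso; move: (above I h); rewrite czI -/al => h'; move: lt1; rewrite -h' (negbTE (irr _)).
    by exfalso; apply: ne; rewrite az // cz xz // az // mulr0 addr0 mulr0.
  rewrite k0I czI -/al in ltc.
  by move: (trans _ _ _ ltc lt1); rewrite (negbTE (irr _)).
move/lgenP: claim => [r hr].
pose y := x - r *: a.
have yk : inV B k y.
  apply/inVP => j kj; rewrite coefsB coefsZ.
  move: kj; rewrite leq_eqVlt => /orP [/eqP kj|kj].
    have -> : j = I by apply: val_inj.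
    by rewrite -/xi -/al hr subrr.
  by rewrite xz // az // mulr0 subr0.
have xeq : x = r *: a + y by rewrite /y addrC subrK.
case: (eqVneq y 0) => [y0|ynz].
  by apply/(memC Ceq); exists r, 0; split => //; rewrite xeq y0.
have [J Jk Jlev] := level_exists yk ynz.
have yC : y \in C J.+1.
  apply: IHs => //; first by rewrite /= (leq_trans (ltn_ord J)).
  move=> g c hg' hc.
  have -> : g *: y + c = g *: x + ((- (g * r)) *: a + c).
    by rewrite /y scalerBr scalerA scaleNr addrA.
  apply: Hx => //; apply/(memC Ceq); exists (- (g * r)), c; split => //.
  by move: hc; apply/subsetP; apply: C_mono => //; apply: ltnW.
apply/(memC Ceq); exists r, y; split => //.
by move: yC; apply/subsetP; apply: C_mono => //; apply: ltnW.
Qed.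

End Comb.

Theorem mainTheorem7 (R : finUnitRingType) (n : nat)
  (lt : rel R) (B : 'I_n -> 'rV[R]_n) (Gamma : {set R})
  (P : 'rV[R]_n -> bool) (C : nat -> {set 'rV[R]_n}) :
  principal_left_ideal_ring R ->
  strict_total_order lt -> respectful lt ->
  is_basis B -> generator_set Gamma -> left_multiplicative P ->
  greedy_run lt B Gamma P C ->
  forall i : nat, (1 <= i <= n)%N ->
  forall x : 'rV[R]_n, in_level B i x ->
    (forall g c, g \in Gamma -> c \in C i -> P (g *: x + c)) ->
    x \in C i.
Proof.
move=> PR hlt hresp hB hG hP hg i hi x xlev Hx.

exact: (main _ _ _ hB _ _ _ _ hg hlt hresp hG hP PR i i (leqnn i) hi x xlev Hx).
Qed.
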